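(* For every $G\in C^2(\mathbb{R})$ there is a separately convex function $F:\mathbb{R}^2\to\mathbb{R}$ such that $F(t,t)=G(t)$ for each $t\in\mathbb{R}$.
   Context: A function $F:\mathbb{R}^2\to\mathbb{R}$ is called separately convex if it is convex on every line parallel to a coordinate axis. *)

(* Defs.v *)
From Stdlib Require Import Reals.
From Coquelicot Require Import Coquelicot.
Open Scope R_scope.

Definition convex_fun (f : R -> R) : Prop :=
  forall x y t : R, 0 <= t <= 1 ->
    f (t * x + (1 - t) * y) <= t * f x + (1 - t) * f y.

Definition separately_convex (F : R -> R -> R) : Prop :=
  (forall y : R, convex_fun (fun x => F x y)) /\
  (forall x : R, convex_fun (fun y => F x y)).

Definition C2 (G : R -> R) : Prop :=
  (forall x : R, ex_derive G x) /\
  (forall x : R, ex_derive (Derive G) x) /\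
  (forall x : R, continuous (Derive (Derive G)) x).

(* Main.v *)
Require Import Defs.
From Stdlib Require Import Reals.
From Stdlib Require Import Reals Lra Psatz ClassicalEpsilon.
From Coquelicot Require Import Coquelicot.
Open Scope R_scope.


Lemma cont_of_derive f df x : (forall x, is_derive f x (df x)) -> continuity_pt f x.
Proof.
  intros Hd. apply continuity_pt_filterlim. apply (ex_derive_continuous f x).
  exists (df x). apply Hd.
Qed.

Lemma mvt f df a b : (forall x, is_derive f x (df x)) -> a <= b ->
  exists c, a <= c <= b /\ f b - f a = df c * (b - a).
Proof.
  intros Hd Hab.
  destruct (MVT_gen f a b df) as [c [Hc He]].
  - intros; apply Hd.
  - intros; eapply cont_of_derive; eauto.
  - exists c. rewrite Rmin_left in Hc by lra. rewrite Rmax_right in Hc by lra. auto.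
Qed.

Lemma incr_of_deriv f df x z : (forall x, is_derive f x (df x)) -> x <= z ->
  (forall c, x <= c <= z -> 0 <= df c) -> f x <= f z.
Proof.
  intros Hd Hxz Hp. destruct (mvt f df x z Hd Hxz) as [c [Hc He]].
  specialize (Hp c Hc). nra.
Qed.

Lemma convex_of_deriv f df a : (forall x, is_derive f x (df x)) ->
  (forall u v, a <= u -> u <= v -> df u <= df v) ->
  forall x z t, a <= x -> a <= z -> 0 <= t <= 1 ->
  f (t * x + (1 - t) * z) <= t * f x + (1 - t) * f z.
Proof.
  intros Hd Hm.
  assert (key : forall x z t, a <= x -> x <= z -> 0 <= t <= 1 ->
    f (t * x + (1 - t) * z) <= t * f x + (1 - t) * f z).
  { intros x z t Hx Hxz Ht. set (c := t * x + (1 - t) * z).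
    assert (Hc1 : x <= c) by (unfold c; nra).
    assert (Hc2 : c <= z) by (unfold c; nra).
    destruct (mvt f df x c Hd Hc1) as [c1 [Hc1' He1]].
    destruct (mvt f df c z Hd Hc2) as [c2 [Hc2' He2]].
    assert (Hdd : df c1 <= df c2) by (apply Hm; lra).
    assert (E1 : c - x = (1 - t) * (z - x)) by (unfold c; ring).
    assert (E2 : z - c = t * (z - x)) by (unfold c; ring).
    rewrite E1 in He1. rewrite E2 in He2.
    assert (P : 0 <= t * (1 - t) * (z - x)).
    { apply Rmult_le_pos; [nra|lra]. }
    assert (0 <= t * (1 - t) * (z - x) * (df c2 - df c1)) by (apply Rmult_le_pos; lra).
    nra. }
  intros x z t Hx Hz Ht. destruct (Rle_dec x z).
  - apply key; auto.
  - replace (t * x + (1 - t) * z) with ((1 - t) * z + (1 - (1 - t)) * x) by ring.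
    replace (t * f x + (1 - t) * f z) with ((1 - t) * f z + (1 - (1 - t)) * f x) by ring.
    apply key; lra.
Qed.

Lemma cpt_intro f x0 : (forall eps, 0 < eps -> exists d, 0 < d /\
  forall x, Rabs (x - x0) < d -> Rabs (f x - f x0) < eps) -> continuity_pt f x0.
Proof.
  intros H. unfold continuity_pt, continue_in, limit1_in, limit_in. simpl.
  intros eps Heps. destruct (H eps Heps) as [d [Hd Hx]]. exists d. split; auto.
  intros x [_ Hxd]. unfold R_dist in *. apply Hx; auto.
Qed.

Lemma cpt_elim f x0 : continuity_pt f x0 -> forall eps, 0 < eps -> exists d, 0 < d /\
  forall x, Rabs (x - x0) < d -> Rabs (f x - f x0) < eps.
Proof.
  unfold continuity_pt, continue_in, limit1_in, limit_in. simpl.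
  intros H eps Heps. destruct (H eps Heps) as [d [Hd Hx]]. exists d. split; auto.
  intros x Hxd. destruct (Req_dec x0 x) as [<-|Hne].
  - unfold Rminus. rewrite Rplus_opp_r, Rabs_R0. auto.
  - apply (Hx x). unfold D_x, no_cond, R_dist. auto.
Qed.

Definition maxpt (m : R -> R) (u : R) : R :=
  epsilon (inhabits 0) (fun c => 0 <= c <= Rmax 0 u /\
     forall s, 0 <= s <= Rmax 0 u -> m s <= m c).

Definition Rm (m : R -> R) (u : R) : R := m (maxpt m u).

Section RunMax.
Variable m : R -> R.
Hypothesis Hc : forall x, continuity_pt m x.
Hypothesis Hpos : forall x, 0 <= m x.

Lemma maxpt_spec u : 0 <= maxpt m u <= Rmax 0 u /\
     forall s, 0 <= s <= Rmax 0 u -> m s <= m (maxpt m u).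
Proof.
  unfold maxpt. apply epsilon_spec.
  destruct (continuity_ab_maj m 0 (Rmax 0 u)) as [c [H1 H2]].
  - apply Rmax_l.
  - intros; apply Hc.
  - exists c. split; auto.
Qed.

Lemma Rm_ge u s : 0 <= s <= Rmax 0 u -> m s <= Rm m u.
Proof. intros; apply maxpt_spec; auto. Qed.

Lemma Rm_nonneg u : 0 <= Rm m u.
Proof. apply Hpos. Qed.

Lemma Rm_mono u v : u <= v -> Rm m u <= Rm m v.
Proof.
  intros Huv. destruct (maxpt_spec u) as [H1 _]. apply Rm_ge.
  split; [lra|]. eapply Rle_trans; [apply H1|]. apply Rle_max_compat_l; auto.
Qed.

Lemma Rm_cont_aux u0 eps : 0 <= u0 -> 0 < eps -> exists d, 0 < d /\
  forall u, 0 <= u -> Rabs (u - u0) < d -> Rabs (Rm m u - Rm m u0) < eps.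
Proof.
  intros Hu0 Heps.
  destruct (cpt_elim m u0 (Hc u0) (eps/2)) as [d [Hd Hx]]; [lra|].
  exists d. split; auto. intros u Hu Hud.
  assert (Mu : Rmax 0 u = u) by (apply Rmax_right; lra).
  assert (Mu0 : Rmax 0 u0 = u0) by (apply Rmax_right; lra).
  destruct (Rle_dec u0 u).
  - assert (A1 : Rm m u0 <= Rm m u) by (apply Rm_mono; lra).
    destruct (maxpt_spec u) as [[Hc1 Hc2] _]. rewrite Mu in Hc2.
    set (c := maxpt m u) in *.
    assert (A2 : Rm m u <= Rm m u0 + eps/2).
    { unfold Rm at 1; fold c. destruct (Rle_dec c u0).
      - assert (m c <= Rm m u0) by (apply Rm_ge; rewrite Mu0; lra). lra.
      - assert (Rabs (c - u0) < d) by (rewrite Rabs_right by lra; rewrite Rabs_right in Hud by lra; lra).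
        specialize (Hx c H). apply Rabs_def2 in Hx.
        assert (m u0 <= Rm m u0) by (apply Rm_ge; rewrite Mu0; lra). lra. }
    apply Rabs_def1; lra.
  - assert (A1 : Rm m u <= Rm m u0) by (apply Rm_mono; lra).
    destruct (maxpt_spec u0) as [[Hc1 Hc2] _]. rewrite Mu0 in Hc2.
    set (c := maxpt m u0) in *.
    assert (A2 : Rm m u0 < Rm m u + eps).
    { unfold Rm at 1; fold c. destruct (Rle_dec c u).
      - assert (m c <= Rm m u) by (apply Rm_ge; rewrite Mu; lra). lra.
      - assert (Rabs (c - u0) < d) by (rewrite Rabs_left1 by lra; rewrite Rabs_left1 in Hud by lra; lra).
        pose proof (Hx c H) as Hx1. apply Rabs_def2 in Hx1.
        pose proof (Hx u Hud) as Hx2. apply Rabs_def2 in Hx2.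
        assert (m u <= Rm m u) by (apply Rm_ge; rewrite Mu; lra). lra. }
    apply Rabs_def1; lra.
Qed.

Lemma Rm_maxeq u : Rm m u = Rm m (Rmax 0 u).
Proof.
  assert (E : Rmax 0 (Rmax 0 u) = Rmax 0 u) by (apply Rmax_right; apply Rmax_l).
  unfold Rm, maxpt. rewrite E. reflexivity.
Qed.

Lemma Rm_cont x : continuity_pt (Rm m) x.
Proof.
  apply cpt_intro. intros eps Heps.
  destruct (Rm_cont_aux (Rmax 0 x) eps (Rmax_l _ _) Heps) as [d [Hd H]].
  exists d. split; auto. intros y Hy.
  rewrite (Rm_maxeq y), (Rm_maxeq x). apply H. apply Rmax_l.
  eapply Rle_lt_trans; [|apply Hy].
  unfold Rmax, Rabs; repeat destruct Rle_dec; repeat destruct Rcase_abs; lra.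
Qed.

End RunMax.

Section Rho.
Variable m : R -> R.
Hypothesis Hc : forall x, continuity_pt m x.
Hypothesis Hpos : forall x, 0 <= m x.
Definition rhoof (t : R) : R := Rmax 0 t * Rm m t.

Lemma rhoof_cont x : continuous rhoof x.
Proof.
  apply continuity_pt_filterlim.
  change (continuity_pt (mult_fct (Rmax 0) (Rm m)) x).
  apply continuity_pt_mult; [|apply Rm_cont; auto].
  apply cpt_intro. intros eps Heps. exists eps. split; auto.
  intros y Hy. eapply Rle_lt_trans; [|apply Hy].
  unfold Rmax, Rabs; repeat destruct Rle_dec; repeat destruct Rcase_abs; lra.
Qed.

Lemma rhoof_pos x : 0 <= rhoof x.
Proof. unfold rhoof. apply Rmult_le_pos. apply Rmax_l. apply Rm_nonneg; auto. Qed.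

Lemma rhoof_zero x : x <= 0 -> rhoof x = 0.
Proof. intros. unfold rhoof. rewrite Rmax_left by lra. ring. Qed.

Lemma rhoof_mono u v : u <= v -> rhoof u <= rhoof v.
Proof.
  intros. unfold rhoof. apply Rmult_le_compat. apply Rmax_l. apply Rm_nonneg; auto.
  apply Rle_max_compat_l; auto. apply Rm_mono; auto.
Qed.

Lemma rhoof_ge t : 1 <= t -> m t <= rhoof t.
Proof.
  intros. unfold rhoof. rewrite Rmax_right by lra.
  assert (m t <= Rm m t) by (apply Rm_ge; auto; rewrite Rmax_right; lra).
  assert (0 <= m t) by auto. nra.
Qed.

Lemma Rm1_ge t : 0 <= t <= 1 -> m t <= Rm m 1.
Proof. intros. apply Rm_ge; auto. rewrite Rmax_right; lra. Qed.
End Rho.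

Section Tr.
Variable rho : R -> R.
Hypothesis rho_cont : forall x, continuous rho x.
Hypothesis rho_pos : forall x, 0 <= rho x.
Hypothesis rho_zero : forall x, x <= 0 -> rho x = 0.
Hypothesis rho_mono : forall u v, u <= v -> rho u <= rho v.

Definition P (t : R) : R := RInt rho 0 t.
Definition H (t : R) : R := RInt P 0 t.

Lemma P_der x : is_derive P x (rho x).
Proof.
  apply (is_derive_RInt rho P 0 x); [|apply rho_cont].
  apply filter_forall. intros b. unfold P.
  exact (RInt_correct _ _ _ (ex_RInt_continuous _ _ _ (fun z _ => rho_cont z))).
Qed.

Lemma P_cont x : continuous P x.
Proof. exact (ex_derive_continuous (K:=R_AbsRing) (V:=R_NormedModule) P x (ex_intro _ (rho x) (P_der x))). Qed.

Lemma H_der x : is_derive H x (P x).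
Proof.
  apply (is_derive_RInt P H 0 x); [|apply P_cont].
  apply filter_forall. intros b. unfold H.
  exact (RInt_correct _ _ _ (ex_RInt_continuous _ _ _ (fun z _ => P_cont z))).
Qed.

Lemma P_mono u v : u <= v -> P u <= P v.
Proof. intros; apply (incr_of_deriv P rho); auto. apply P_der. Qed.

Lemma P0 : P 0 = 0.
Proof. unfold P. rewrite RInt_point. reflexivity. Qed.

Lemma P_pos x : 0 <= P x.
Proof.
  destruct (Rle_dec 0 x).
  - rewrite <- P0. apply P_mono; auto.
  - destruct (mvt P rho x 0 P_der) as [c [Hc He]]; [lra|].
    rewrite rho_zero in He by lra. rewrite P0 in He. lra.
Qed.

Definition F1 (x y : R) : R :=
  - H (Rmax x y) + P (Rmax x y) * (Rmax x y - Rmin x y).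

Lemma F1_sym x y : F1 x y = F1 y x.
Proof. unfold F1. rewrite Rmax_comm, Rmin_comm. reflexivity. Qed.

Lemma F1_diag t : F1 t t = - H t.
Proof. unfold F1. rewrite Rmax_left, Rmin_left by lra. ring. Qed.

Section Fix.
Variable y : R.
Definition phi (x : R) : R := - H x + P x * (x - y).

Lemma phi_der x : is_derive phi x (rho x * (x - y)).
Proof.
  unfold phi.
  assert (D1 := is_derive_opp _ _ _ (H_der x)).
  assert (D2 : is_derive (fun t => t - y) x 1).
  { assert (K := is_derive_minus (fun t => t) (fun _ => y) x 1 0 (is_derive_id x) (is_derive_const y x)).
    simpl in K. replace 1 with (1 - 0) by ring. exact K. }
  assert (D3 := is_derive_mult _ _ _ _ _ (P_der x) D2 Rmult_comm).
  assert (D4 := is_derive_plus _ _ _ _ _ D1 D3).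
  simpl in D4. replace (rho x * (x - y)) with (plus (opp (P x)) (plus (mult (rho x) (x - y)) (mult (P x) 1))).
  exact D4. unfold plus, opp, mult; simpl. ring.
Qed.

Lemma phi_incr u v : y <= u -> u <= v -> phi u <= phi v.
Proof.
  intros. apply (incr_of_deriv phi (fun x => rho x * (x - y))); auto.
  apply phi_der. intros c Hc. apply Rmult_le_pos; [apply rho_pos|lra].
Qed.

Lemma phi_conv x z t : y <= x -> y <= z -> 0 <= t <= 1 ->
  phi (t * x + (1 - t) * z) <= t * phi x + (1 - t) * phi z.
Proof.
  apply (convex_of_deriv phi (fun x => rho x * (x - y)) y phi_der).
  intros u v Hu Huv. assert (rho u <= rho v) by auto.
  assert (0 <= rho u) by auto. nra.
Qed.

Definition phih (x : R) : R := phi (Rmax x y).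
Definition Lf (x : R) : R := - H y + P y * (y - x).

Lemma phih_conv : convex_fun phih.
Proof.
  intros x z t Ht. unfold phih.
  eapply Rle_trans.
  - apply (phi_incr _ (t * Rmax x y + (1 - t) * Rmax z y)). apply Rmax_r.
    apply Rmax_lub.
    + assert (x <= Rmax x y) by apply Rmax_l. assert (z <= Rmax z y) by apply Rmax_l. nra.
    + assert (y <= Rmax x y) by apply Rmax_r. assert (y <= Rmax z y) by apply Rmax_r. nra.
  - apply phi_conv; auto; apply Rmax_r.
Qed.

Lemma F1_max x : F1 x y = Rmax (Lf x) (phih x).
Proof.
  unfold F1, Lf, phih, phi.
  destruct (Rle_dec x y).
  - rewrite (Rmax_right x y), (Rmin_left x y) by lra.
    rewrite Rmax_left. reflexivity.
    assert (0 <= P y) by apply P_pos. nra.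
  - rewrite (Rmax_left x y), (Rmin_right x y) by lra.
    rewrite Rmax_right. reflexivity.
    destruct (mvt H P y x H_der) as [c [Hc He]]; [lra|].
    assert (P c <= P x) by (apply P_mono; lra).
    assert (0 <= P y) by apply P_pos. nra.
Qed.

Lemma F1_convx : convex_fun (fun x => F1 x y).
Proof.
  intros x z t Ht. rewrite !F1_max.
  assert (HL : Lf (t * x + (1 - t) * z) = t * Lf x + (1 - t) * Lf z) by (unfold Lf; ring).
  assert (HP := phih_conv x z t Ht).
  apply Rmax_lub.
  - rewrite HL. assert (Lf x <= Rmax (Lf x) (phih x)) by apply Rmax_l.
    assert (Lf z <= Rmax (Lf z) (phih z)) by apply Rmax_l. nra.
  - assert (phih x <= Rmax (Lf x) (phih x)) by apply Rmax_r.
    assert (phih z <= Rmax (Lf z) (phih z)) by apply Rmax_r. nra.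
Qed.
End Fix.

Lemma F1_convy x : convex_fun (fun y => F1 x y).
Proof.
  intros a b t Ht. rewrite !(F1_sym x). apply F1_convx; auto.
Qed.

End Tr.


Lemma convex_ext f g : (forall x, f x = g x) -> convex_fun f -> convex_fun g.
Proof. intros E Hf x y t Ht. rewrite <- !E. apply Hf; auto. Qed.
Lemma convex_plus f g : convex_fun f -> convex_fun g -> convex_fun (fun x => f x + g x).
Proof. intros Hf Hg x y t Ht. specialize (Hf x y t Ht). specialize (Hg x y t Ht). lra. Qed.
Lemma convex_half f : convex_fun f -> convex_fun (fun x => f x / 2).
Proof. intros Hf x y t Ht. specialize (Hf x y t Ht). lra. Qed.
Lemma convex_lin a b : convex_fun (fun x => a * x + b).
Proof. intros x y t Ht. apply Req_le. ring. Qed.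
Lemma convex_neg f : convex_fun f -> convex_fun (fun x => f (- x)).
Proof. intros Hf x y t Ht. replace (- (t * x + (1 - t) * y)) with (t * (-x) + (1 - t) * (-y)) by ring.
  apply Hf; auto. Qed.

Lemma derive_neg f t d : is_derive f (- t) d -> is_derive (fun x => f (- x)) t (- d).
Proof.
  intros Hd. assert (K := is_derive_comp f (fun x => - x) t d (-1) Hd).
  assert (Hn : is_derive (fun x : R => - x) t (-1)).
  { exact (is_derive_opp (fun x : R => x) t 1 (is_derive_id t)). }
  specialize (K Hn). replace (- d) with (scal (-1) d). exact K.
  unfold scal; simpl; unfold mult; simpl. ring.
Qed.

Theorem lemma5p5 (G : R -> R) (hG : C2 G) :
  exists F : R -> R -> R, separately_convex F /\ forall t : R, F t t = G t.
Proof.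
  destruct hG as [hG1 [hG2 hG3]].
  set (g := Derive (Derive G)).
  set (m := fun t => (Rabs (g t) - g t) / 2).
  assert (gc : forall x, continuity_pt g x) by (intros; apply continuity_pt_filterlim; apply hG3).
  assert (mpos : forall x, 0 <= m x) by (intros; unfold m; unfold Rabs; destruct Rcase_abs; lra).
  assert (mg : forall x, - g x <= m x) by (intros; unfold m; unfold Rabs; destruct Rcase_abs; lra).
  assert (mc : forall x, continuity_pt m x).
  { intros x. apply cpt_intro. intros eps Heps.
    destruct (cpt_elim g x (gc x) eps Heps) as [d [Hd Hx]]. exists d. split; auto.
    intros y Hy. specialize (Hx y Hy). eapply Rle_lt_trans; [|apply Hx].
    unfold m. unfold Rabs at 1 2 3 4; repeat destruct Rcase_abs; unfold Rabs; repeat destruct Rcase_abs; lra. }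
  set (m2 := fun t => m (- t)).
  assert (m2pos : forall x, 0 <= m2 x) by (intros; apply mpos).
  assert (m2c : forall x, continuity_pt m2 x).
  { intros x. apply cpt_intro. intros eps Heps.
    destruct (cpt_elim m (-x) (mc (-x)) eps Heps) as [d [Hd Hx]]. exists d. split; auto.
    intros y Hy. apply (Hx (-y)). replace (-y - - x) with (- (y - x)) by ring. rewrite Rabs_Ropp. auto. }
  set (r1 := rhoof m). set (r2 := rhoof m2).
  set (K := Rm m 1 + Rm m2 1).
  assert (Kpos : 0 <= K) by (unfold K; assert (0 <= Rm m 1) by (apply Rm_nonneg; auto);
     assert (0 <= Rm m2 1) by (apply Rm_nonneg; auto); lra).
  set (C := fun t => G t + H r1 t + H r2 (- t) + K / 2 * (t * t)).
  set (dC := fun t => Derive G t + P r1 t - P r2 (- t) + K * t).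
  set (ddC := fun t => g t + r1 t + r2 (- t) + K).
  assert (r1c := rhoof_cont m mc). assert (r2c := rhoof_cont m2 m2c).
  assert (dsq : forall t, is_derive (fun x => K / 2 * (x * x)) t (K * t)).
  { intros t. assert (D := is_derive_mult (fun x => x) (fun x => x) t 1 1 (is_derive_id t) (is_derive_id t) Rmult_comm).
    assert (D2 := is_derive_scal _ _ (K/2) _ D). replace (K * t) with (K / 2 * plus (mult 1 t) (mult t 1)).
    exact D2. unfold plus, mult; simpl. field. }
  assert (dCd : forall t, is_derive C t (dC t)).
  { intros t. unfold C, dC.
    assert (D1 := Derive_correct G t (hG1 t)).
    assert (D2 := H_der r1 r1c t).
    assert (D3 := derive_neg (H r2) t _ (H_der r2 r2c (- t))).
    assert (D := is_derive_plus _ _ _ _ _ (is_derive_plus _ _ _ _ _ (is_derive_plus _ _ _ _ _ D1 D2) D3) (dsq t)).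
    exact D. }
  assert (ddCd : forall t, is_derive dC t (ddC t)).
  { intros t. unfold dC, ddC.
    assert (D1 := Derive_correct (Derive G) t (hG2 t)).
    assert (D2 := P_der r1 r1c t).
    assert (D3 := derive_neg (P r2) t _ (P_der r2 r2c (- t))).
    assert (D4 : is_derive (fun x => K * x) t K).
    { assert (E := is_derive_scal _ _ K _ (is_derive_id t)). change (@one R_AbsRing) with 1 in E. rewrite Rmult_1_r in E. exact E. }
    assert (D := is_derive_plus _ _ _ _ _ (is_derive_minus _ _ _ _ _ (is_derive_plus _ _ _ _ _ D1 D2) D3) D4).
    replace (g t + r1 t + r2 (- t) + K) with (plus (minus (plus (Derive (Derive G) t) (r1 t)) (- r2 (- t))) K).
    exact D. unfold plus, minus, opp; simpl. fold g. change (plus (g t + r1 t) (- - r2 (- t))) with ((g t + r1 t) + - - r2 (- t)). ring. }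
  assert (ddCpos : forall t, 0 <= ddC t).
  { intros t. unfold ddC. specialize (mg t).
    assert (0 <= r1 t) by (apply rhoof_pos; auto).
    assert (0 <= r2 (- t)) by (apply rhoof_pos; auto).
    assert (0 <= Rm m 1) by (apply Rm_nonneg; auto).
    assert (0 <= Rm m2 1) by (apply Rm_nonneg; auto).
    destruct (Rle_dec 1 t).
    - assert (m t <= r1 t) by (apply rhoof_ge; auto). lra.
    - destruct (Rle_dec t (-1)).
      + assert (Q3 : m2 (- t) <= r2 (- t)) by (apply rhoof_ge; auto; lra).
        change (m2 (- t)) with (m (- - t)) in Q3. rewrite Ropp_involutive in Q3. lra.
      + destruct (Rle_dec 0 t).
        * assert (m t <= Rm m 1) by (apply Rm1_ge; auto; lra). unfold K. lra.
        * assert (Q3 : m2 (- t) <= Rm m2 1) by (apply Rm1_ge; auto; lra).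
          change (m2 (- t)) with (m (- - t)) in Q3. rewrite Ropp_involutive in Q3. unfold K. lra. }
  assert (Cconv : convex_fun C).
  { intros x z t Ht. apply (convex_of_deriv C dC (Rmin x z) dCd).
    - intros u v _ Huv. apply (incr_of_deriv dC ddC); auto.
    - apply Rmin_l.
    - apply Rmin_r.
    - auto. }
  assert (r1p : forall x, 0 <= r1 x) by (intros; apply rhoof_pos; auto).
  assert (r2p : forall x, 0 <= r2 x) by (intros; apply rhoof_pos; auto).
  assert (r1z : forall x, x <= 0 -> r1 x = 0) by (intros; apply rhoof_zero; auto).
  assert (r2z : forall x, x <= 0 -> r2 x = 0) by (intros; apply rhoof_zero; auto).
  assert (r1m : forall u v, u <= v -> r1 u <= r1 v) by (intros; apply rhoof_mono; auto).
  assert (r2m : forall u v, u <= v -> r2 u <= r2 v) by (intros; apply rhoof_mono; auto).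
  exists (fun x y => (C x + C y) / 2 + F1 r1 x y + F1 r2 (- x) (- y) - K / 2 * x * y).
  split; [split|].
  - intros y. apply (convex_ext (fun x => (C x / 2 + ((- (K / 2 * y)) * x + C y / 2)) + (F1 r1 x y + F1 r2 (- x) (- y)))).
    + intros x. cbv beta. lra.
    + apply convex_plus; apply convex_plus.
      * apply convex_half; auto.
      * apply convex_lin.
      * apply F1_convx; auto.
      * apply (convex_neg (fun x => F1 r2 x (- y))). apply F1_convx; auto.
  - intros x. apply (convex_ext (fun y => (C y / 2 + ((- (K / 2 * x)) * y + C x / 2)) + (F1 r1 x y + F1 r2 (- x) (- y)))).
    + intros y. cbv beta. lra.
    + apply convex_plus; apply convex_plus.
      * apply convex_half; auto.
      * apply convex_lin.
      * apply F1_convy; auto.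
      * apply (convex_neg (fun y => F1 r2 (- x) y)). apply F1_convy; auto.
  - intros t. rewrite !F1_diag. unfold C. field.
Qed.
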